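(* Let $\mathcal{R}$ be a PTRS and let $\mathfrak{P}=(V,E,L_{\mathcal{A}},L_{\mathcal{C}})$ be a well-formed solved proof tree whose root $v_1$ satisfies $L_{\mathcal{A}}(v_1)=\langle\mathcal{A}(\mathcal{R}),\mathcal{A}(\mathcal{R})\rangle$. Then $\iota_{\mathcal{R}}\sqsubseteq\max\{L_{\mathcal{C}}(v)\mid v\in V\}$.
   Context: PTRS: a finite set $\mathcal{R}$ of rules $\ell\to\{p_1:r_1,\dots,p_k:r_k\}$ over a finite signature $\Sigma$, $\ell$ not a variable, $0<p_j\le1$, $\sum p_j=1$, $\mathcal{V}(r_j)\subseteq\mathcal{V}(\ell)$. Defined symbols $\mathcal{D}$ = roots of left-hand sides; basic terms are $f(t_1,\dots,t_k)$ with $f\in\mathcal{D}$ and $t_i$ containing no defined symbols; $|t|$ is term size. Innermost rewriting: $s\to_{\mathcal{R}}\{p_j:s[r_j\sigma]_\pi\}$ if $s|_\pi=\ell\sigma$ and all proper subterms of $\ell\sigma$ are $\mathcal{R}$-normal forms. A rewrite sequence tree (RST) is a possibly infinite, finitely branching tree with nodes labeled $(p_v:t_v)$, root probability 1, and $t_v\to_{\mathcal{R}}\{\tfrac{p_w}{p_v}:t_w\}_{w\text{ child}}$ for inner nodes; $\operatorname{edl}(\mathfrak{T})=\sum_{v\text{ inner}}p_v$; $\operatorname{edh}_{\mathcal{R}}(t)=\sup$ of $\operatorname{edl}$ over RSTs with root $t$; $\operatorname{eirc}_{\mathcal{R}}(n)=\sup\{\operatorname{edh}_{\mathcal{R}}(t)\mid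 t\text{ basic},|t|\le n\}$; $\iota_{\mathcal{R}}=\iota(\operatorname{eirc}_{\mathcal{R}})$. Complexities $\mathfrak{C}=\{\mathrm{Pol}_0,\mathrm{Pol}_1,\dots,\mathrm{Exp},\mathrm{2\text{-}Exp},\mathrm{Fin},\omega\}$ ordered $\mathrm{Pol}_0\sqsubset\mathrm{Pol}_1\sqsubset\dots\sqsubset\mathrm{Exp}\sqsubset\mathrm{2\text{-}Exp}\sqsubset\mathrm{Fin}\sqsubset\omega$, $\oplus$ = maximum; $\iota(f)=\mathrm{Pol}_a$ for least $a$ with $f\in O(n^a)$, else $\mathrm{Exp}$ if $f\in O(2^{\mathrm{pol}(n)})$, else $\mathrm{2\text{-}Exp}$ if $f\in O(2^{2^{\mathrm{pol}(n)}})$, else $\mathrm{Fin}$ if $f$ never equals $\omega$, else $\omega$. Annotated dependency pairs: fresh symbols $f^\sharp$ for $f\in\mathcal{D}$; $\flat$ removes annotations, $\sharp_{\mathcal{D}}(t)$ annotates all defined symbols, $\flat^\uparrow_\pi$ removes annotations strictly above $\pi$, $t^\sharp$ annotates the root. An ADP is $\ell\to\{p_1:r_1,\dots,p_k:r_k\}^m$ with $r_j$ possibly annotated and flag $m\in\{\mathsf{true},\mathsf{false}\}$. $\mathcal{A}(\mathcal{R})=\{\ell\to\{p_1:\sharp_{\mathcal{D}}(r_1),\dots,p_k:\sharp_{\mathcal{D}}(r_k)\}^{\mathsf{true}}\mid \ell\to\{p_1:r_1,\dots\}\in\mathcal{R}\}$. Rewriting with a set $\mathcal{P}$ of ADPs: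 at a position $\pi$ with defined or annotated symbol, ADP $\ell\to\{p_j:r_j\}^m\in\mathcal{P}$, $\sigma$ with $\flat(s|_\pi)=\ell\sigma$ having only normal-form proper subterms: $t_j=s[r_j\sigma]_\pi$ (at: $m=\mathsf{true}$, $\pi$ annotated), $s[\flat(r_j)\sigma]_\pi$ (nt), $\flat^\uparrow_\pi(s[r_j\sigma]_\pi)$ (af: $m=\mathsf{false}$, annotated), $\flat^\uparrow_\pi(s[\flat(r_j)\sigma]_\pi)$ (nf). $\mathcal{P}$-chain trees are defined like RSTs with this relation. For $\mathcal{S}\subseteq\mathcal{P}$: $\operatorname{edl}_{\langle\mathcal{P},\mathcal{S}\rangle}(\mathfrak{T})$ sums $p_v$ over inner nodes rewritten by (at)/(af)-steps with ADPs from $\mathcal{S}$; $\operatorname{edh}_{\langle\mathcal{P},\mathcal{S}\rangle}(t)$ = supremum over chain trees with root $t^\sharp$ for basic $t$; $\iota_{\langle\mathcal{P},\mathcal{S}\rangle}=\iota(n\mapsto\sup\{\operatorname{edh}_{\langle\mathcal{P},\mathcal{S}\rangle}(t)\mid t\text{ basic},|t|\le n\})$. ADP problems $\langle\mathcal{P},\mathcal{S}\rangle$ ($\mathcal{S}\subseteq\mathcal{P}$, solved iff $\mathcal{S}=\emptyset$); processors map an ADP problem to a complexity and a finite set of ADP problems. A proof tree $(V,E,L_{\mathcal{A}},L_{\mathcal{C}})$ is a finite tree labeling nodes with ADP problems and complexities such that at each inner node $v$ with children $w_i$ some processor maps $L_{\mathcal{A}}(v)$ to $(L_{\mathcal{C}}(v),\{L_{\mathcal{A}}(w_i)\})$,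 and leaves carry $\mathrm{Pol}_0$ if solved, $\omega$ otherwise; it is solved if all leaf problems are solved. It is well formed if for every node $v$ with $L_{\mathcal{A}}(v)=\langle\mathcal{P},\mathcal{S}\rangle$ and root path $v_1,\dots,v_k=v$: $\iota_{\langle\mathcal{P},\mathcal{S}\rangle}\sqsubseteq L_{\mathcal{C}}(v_1)\oplus\dots\oplus L_{\mathcal{C}}(v_{k-1})\oplus\max\{L'_{\mathcal{C}}(w)\mid w$ reachable from $v$ including $v\}$ and $\iota_{\langle\mathcal{P},\mathcal{P}\setminus\mathcal{S}\rangle}\sqsubseteq L_{\mathcal{C}}(v_1)\oplus\dots\oplus L_{\mathcal{C}}(v_{k-1})$, with $L'_{\mathcal{C}}=L_{\mathcal{C}}$ on inner nodes and $L'_{\mathcal{C}}(w)=\iota_{L_{\mathcal{A}}(w)}$ on leaves (empty $\oplus$ is $\mathrm{Pol}_0$). *)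

(* Defs.v *)
From Stdlib Require Import Reals List Permutation Arith.
From Stdlib Require Import ClassicalDescription ClassicalEpsilon.
From Coquelicot Require Import Rbar Lub.
Import ListNotations.
Set Implicit Arguments.
Unset Strict Implicit.
Local Open Scope R_scope.

Inductive term (F : Type) : Type :=
| Var : nat -> term F
| Fn  : F -> list (term F) -> term F.
Arguments Var {F} _.
Arguments Fn {F} _ _.

Section Terms.
Variable F : Type.

Fixpoint tsize (t : term F) : nat :=
  match t with
  | Var _ => 1
  | Fn _ ts => S (fold_right plus 0%nat (map tsize ts))
  end.

Fixpoint vars (t : term F) : list nat :=
  match t with
  | Var x => [x]
  | Fn _ ts => flat_map vars ts
  end.

Fixpoint subst (t : term F) (sigma : nat -> term F) : term F :=
  match t with
  | Var x => sigma x
  | Fn f ts => Fn f (map (fun u => subst u sigma) ts)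
  end.

Fixpoint wf_term (ar : F -> nat) (t : term F) : Prop :=
  match t with
  | Var _ => True
  | Fn f ts => length ts = ar f /\ fold_right and True (map (wf_term ar) ts)
  end.

Fixpoint syms (t : term F) : list F :=
  match t with
  | Var _ => []
  | Fn f ts => f :: flat_map syms ts
  end.

(* positions are lists of (0-based) argument indices *)
Fixpoint subterm_at (t : term F) (p : list nat) : option (term F) :=
  match p with
  | [] => Some t
  | i :: p' =>
      match t with
      | Var _ => None
      | Fn _ ts =>
          match nth_error ts i with
          | Some u => subterm_at u p'
          | None => None
          end
      end
  end.

Fixpoint list_upd (A : Type) (l : list A) (i : nat) (g : A -> A) : list A :=
  match l, i with
  | [], _ => []
  | x :: l', O => g x :: l'
  | x :: l', S i' => x :: list_upd l' i' g
  end.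

Fixpoint replace_at (t : term F) (p : list nat) (u : term F) : term F :=
  match p with
  | [] => u
  | i :: p' =>
      match t with
      | Var x => Var x
      | Fn f ts => Fn f (list_upd ts i (fun v => replace_at v p' u))
      end
  end.

Definition root_sym (t : term F) : option F :=
  match t with Var _ => None | Fn f _ => Some f end.
End Terms.

Fixpoint map_term (F G : Type) (g : F -> G) (t : term F) : term G :=
  match t with
  | Var x => Var x
  | Fn f ts => Fn (g f) (map (map_term g) ts)
  end.

Section PTRS.
Variable Sg : Type.
Variable ar : Sg -> nat.

Record rule := mkRule { lhs : term Sg ; rhs : list (R * term Sg) }.

Definition sumR (l : list (R * term Sg)) : R := fold_right (fun pr acc => fst pr + acc) 0 l.

Definition is_rule (r : rule) : Prop :=
  (exists f ts, lhs r = Fn f ts) /\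
  wf_term ar (lhs r) /\
  (forall p t, In (p, t) (rhs r) -> 0 < p <= 1 /\ wf_term ar t /\ incl (vars t) (vars (lhs r))) /\
  sumR (rhs r) = 1.

Definition is_PTRS (Rs : list rule) : Prop := forall r, In r Rs -> is_rule r.

Definition defined (Rs : list rule) (f : Sg) : Prop :=
  exists r, In r Rs /\ root_sym (lhs r) = Some f.

Definition basic (Rs : list rule) (t : term Sg) : Prop :=
  wf_term ar t /\
  exists f ts, t = Fn f ts /\ defined Rs f /\
    forall u, In u ts -> forall g, In g (syms u) -> ~ defined Rs g.

Definition NF (Rs : list rule) (t : term Sg) : Prop :=
  ~ exists r p sigma, In r Rs /\ subterm_at t p = Some (subst (lhs r) sigma).

Definition proper_subterms_NF (Nf : term Sg -> Prop) (t : term Sg) : Prop :=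
  forall p u, p <> [] -> subterm_at t p = Some u -> Nf u.

(* innermost rewrite step s ->_R {p_1:t_1,...,p_k:t_k} (multidistribution as a list) *)
Definition istep (Rs : list rule) (s : term Sg) (mu : list (R * term Sg)) : Prop :=
  exists r p sigma,
    In r Rs /\ subterm_at s p = Some (subst (lhs r) sigma) /\
    proper_subterms_NF (NF Rs) (subst (lhs r) sigma) /\
    Permutation mu (map (fun pt => (fst pt, replace_at s p (subst (snd pt) sigma))) (rhs r)).
End PTRS.

(* nodes are addresses (list of child indices from the root)           *)
Record ltree (L : Type) := mkTree
  { nch : list nat -> nat ;       (* number of children; 0 = leaf *)
    prb : list nat -> R ;
    lab : list nat -> L }.

Inductive is_node (ch : list nat -> nat) : list nat -> Prop :=
| node_root : is_node ch []
| node_child : forall v i, is_node ch v -> (i < ch v)%nat -> is_node ch (v ++ [i]).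

Definition children (ch : list nat -> nat) (v : list nat) : list (list nat) :=
  map (fun i => v ++ [i]) (seq 0 (ch v)).

Fixpoint level (ch : list nat -> nat) (n : nat) : list (list nat) :=
  match n with
  | O => [[]]
  | S n' => flat_map (children ch) (level ch n')
  end.

Definition ind (P : Prop) : R := if excluded_middle_informative P then 1 else 0.

(* sum over all nodes v satisfying [counted v] of p_v, i.e. the supremum of
   the partial sums over the (finitely many) nodes of depth < d *)
Definition wsum (L : Type) (T : ltree L) (counted : list nat -> Prop) : Rbar :=
  Lub_Rbar (fun x => exists d,
     x = fold_right Rplus 0
           (map (fun v => ind (counted v) * prb T v)
              (flat_map (level (nch T)) (seq 0 d)))).

Definition inner (L : Type) (T : ltree L) (v : list nat) : Prop := (0 < nch T v)%nat.

Definition child_dist (L : Type) (T : ltree L) (v : list nat) : list (R * L) :=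
  map (fun w => (prb T w / prb T v, lab T w)) (children (nch T) v).

Section RST.
Variable Sg : Type.
Variable ar : Sg -> nat.
Variable Rs : list (rule Sg).

Definition is_RST (T : ltree (term Sg)) (t : term Sg) : Prop :=
  prb T [] = 1 /\ lab T [] = t /\
  forall v, is_node (nch T) v -> inner T v -> istep Rs (lab T v) (child_dist T v).

Definition edl (T : ltree (term Sg)) : Rbar := wsum T (inner T).

Definition edh (t : term Sg) : Rbar :=
  Rbar_lub (fun x => exists T, is_RST T t /\ x = edl T).

Definition eirc (n : nat) : Rbar :=
  Rbar_lub (fun x => exists t, basic ar Rs t /\ (tsize t <= n)%nat /\ x = edh t).
End RST.

Inductive cplx := Pol (a : nat) | CExp | C2Exp | CFin | COmega.

Definition crank (c : cplx) : nat :=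
  match c with Pol _ => 0 | CExp => 1 | C2Exp => 2 | CFin => 3 | COmega => 4 end.

Definition cleb (c d : cplx) : bool :=
  match c, d with
  | Pol a, Pol b => Nat.leb a b
  | _, _ => Nat.leb (crank c) (crank d)
  end.

Definition cle (c d : cplx) : Prop := cleb c d = true.

Definition cmax (c d : cplx) : cplx := if cleb c d then d else c.

Definition bigO (f : nat -> Rbar) (g : nat -> R) : Prop :=
  exists (c : R) (N : nat), forall n, (N <= n)%nat -> Rbar_le (f n) (Finite (c * g n)).

Definition peval (cs : list R) (n : nat) : R :=
  fold_right (fun c acc => c + INR n * acc) 0 cs.

Definition in_Pol (f : nat -> Rbar) (a : nat) : Prop := bigO f (fun n => INR n ^ a).
Definition in_Exp (f : nat -> Rbar) : Prop :=
  exists cs, bigO f (fun n => Rpower 2 (peval cs n)).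
Definition in_2Exp (f : nat -> Rbar) : Prop :=
  exists cs, bigO f (fun n => Rpower 2 (Rpower 2 (peval cs n))).
Definition never_omega (f : nat -> Rbar) : Prop := forall n, f n <> p_infty.

Definition iota (f : nat -> Rbar) : cplx :=
  if excluded_middle_informative (exists a, in_Pol f a) then
    Pol (epsilon (inhabits 0%nat)
           (fun a => in_Pol f a /\ forall b, in_Pol f b -> (a <= b)%nat))
  else if excluded_middle_informative (in_Exp f) then CExp
  else if excluded_middle_informative (in_2Exp f) then C2Exp
  else if excluded_middle_informative (never_omega f) then CFin
  else COmega.

Definition iota_R (Sg : Type) (ar : Sg -> nat) (Rs : list (rule Sg)) : cplx :=
  iota (eirc ar Rs).

(* annotated terms: symbols paired with an annotation flag (true = f#) *)
Section ADP.
Variable Sg : Type.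
Variable ar : Sg -> nat.
Variable Rs : list (rule Sg).

Definition aterm := term (Sg * bool).

Definition embed (t : term Sg) : aterm := map_term (fun f => (f, false)) t.
Definition erase (t : aterm) : term Sg := map_term fst t.
Definition flat (t : aterm) : aterm := embed (erase t).
Definition sharpD (t : term Sg) : aterm :=
  map_term (fun f => (f, if excluded_middle_informative (defined Rs f) then true else false)) t.
Definition sharp_root (t : term Sg) : aterm :=
  match t with
  | Var x => Var x
  | Fn f ts => Fn (f, true) (map embed ts)
  end.
Fixpoint flat_above (p : list nat) (t : aterm) : aterm :=
  match p with
  | [] => t
  | i :: p' =>
      match t with
      | Var x => Var x
      | Fn fb ts => Fn (fst fb, false) (list_upd ts i (flat_above p'))
      end
  end.

Definition asubst (t : aterm) (sigma : nat -> term Sg) : aterm :=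
  subst t (fun x => embed (sigma x)).

Record adp := mkADP { alhs : term Sg ; arhs : list (R * aterm) ; aflag : bool }.

Definition A_R : list adp :=
  map (fun r => mkADP (lhs r) (map (fun pt => (fst pt, sharpD (snd pt))) (rhs r)) true) Rs.

Definition NF_P (P : adp -> Prop) (t : term Sg) : Prop :=
  ~ exists a p sigma, P a /\ subterm_at t p = Some (subst (alhs a) sigma).

Definition is_annotated (u : aterm) : bool :=
  match u with Var _ => false | Fn fb _ => snd fb end.

Definition adp_step (P : adp -> Prop) (s : aterm) (a : adp) (b : bool)
    (mu : list (R * aterm)) : Prop :=
  P a /\
  exists p u sigma,
    subterm_at s p = Some u /\
    (exists fb us, u = Fn fb us /\ (defined Rs (fst fb) \/ snd fb = true)) /\
    erase u = subst (alhs a) sigma /\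
    proper_subterms_NF (NF_P P) (subst (alhs a) sigma) /\
    b = is_annotated u /\
    Permutation mu
      (map (fun pt =>
         (fst pt,
          match aflag a, b with
          | true, true => replace_at s p (asubst (snd pt) sigma)                       (* at *)
          | true, false => replace_at s p (asubst (flat (snd pt)) sigma)               (* nt *)
          | false, true => flat_above p (replace_at s p (asubst (snd pt) sigma))       (* af *)
          | false, false => flat_above p (replace_at s p (asubst (flat (snd pt)) sigma)) (* nf *)
          end)) (arhs a)).

(* chain trees: labels are (term, ADP used, annotation flag of the rewritten position) *)
Definition is_chain_tree (P : adp -> Prop) (T : ltree (aterm * adp * bool)) (t : aterm) : Prop :=
  prb T [] = 1 /\ fst (fst (lab T [])) = t /\
  forall v, is_node (nch T) v -> inner T v ->
    adp_step P (fst (fst (lab T v))) (snd (fst (lab T v))) (snd (lab T v))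
      (map (fun pl => (fst pl, fst (fst (snd pl)))) (child_dist T v)).

(* nodes rewritten by (at)/(af) steps with ADPs from S *)
Definition edl_PS (S : adp -> Prop) (T : ltree (aterm * adp * bool)) : Rbar :=
  wsum T (fun v => inner T v /\ snd (lab T v) = true /\ S (snd (fst (lab T v)))).

Definition edh_PS (P S : adp -> Prop) (t : term Sg) : Rbar :=
  Rbar_lub (fun x => exists T, is_chain_tree P T (sharp_root t) /\ x = edl_PS S T).

Definition iota_PS (P S : adp -> Prop) : cplx :=
  iota (fun n => Rbar_lub (fun x => exists t, basic ar Rs t /\ (tsize t <= n)%nat /\ x = edh_PS P S t)).

(* ADP problems <P, S>, finite sets represented by lists *)
Record problem := mkProb { pP : list adp ; pS : list adp }.

Definition solved (pb : problem) : Prop := forall a, ~ In a (pS pb).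

Definition iota_prob (pb : problem) : cplx :=
  iota_PS (fun a => In a (pP pb)) (fun a => In a (pS pb)).
Definition iota_prob_compl (pb : problem) : cplx :=
  iota_PS (fun a => In a (pP pb)) (fun a => In a (pP pb) /\ ~ In a (pS pb)).

Inductive ptree := PNode (LA : problem) (LC : cplx) (kids : list ptree).

Definition plabel (t : ptree) : problem := match t with PNode p _ _ => p end.

Fixpoint is_proof_tree (t : ptree) : Prop :=
  match t with
  | PNode p c ks =>
      incl (pS p) (pP p) /\
      (ks = [] -> (solved p -> c = Pol 0) /\ (~ solved p -> c = COmega)) /\
      (ks <> [] -> exists proc : problem -> cplx * list problem,
                     proc p = (c, map plabel ks)) /\
      fold_right and True (map is_proof_tree ks)
  end.

Fixpoint ptree_solved (t : ptree) : Prop :=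
  match t with
  | PNode p _ [] => solved p
  | PNode _ _ ks => fold_right and True (map ptree_solved ks)
  end.

Fixpoint maxLC' (t : ptree) : cplx :=
  match t with
  | PNode p _ [] => iota_prob p
  | PNode _ c ks => fold_right cmax c (map maxLC' ks)
  end.

Fixpoint maxLC (t : ptree) : cplx :=
  match t with
  | PNode _ c ks => fold_right cmax c (map maxLC ks)
  end.

(* acc = L_C(v_1) ⊕ ... ⊕ L_C(v_{k-1}) along the root path *)
Fixpoint wf_from (acc : cplx) (t : ptree) : Prop :=
  match t with
  | PNode p c ks =>
      cle (iota_prob p) (cmax acc (maxLC' t)) /\
      cle (iota_prob_compl p) acc /\
      fold_right and True (map (wf_from (cmax acc c)) ks)
  end.

Definition well_formed (t : ptree) : Prop := wf_from (Pol 0) t.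

Definition same_set (l1 l2 : list adp) : Prop := forall a, In a l1 <-> In a l2.
End ADP.

(* Main.v *)
Require Import Defs.
From Stdlib Require Import List.
From Stdlib Require Import Reals Permutation Arith Lia.
From Stdlib Require Import Classical ClassicalDescription ClassicalEpsilon.
From Coquelicot Require Import Rbar Lub.
Import ListNotations.
Notation iota := Defs.iota.
Notation ind := Defs.ind.

Lemma cle_refl c : cle c c.
Proof. destruct c; unfold cle; simpl; try apply Nat.leb_refl; reflexivity. Qed.

Lemma cle_trans a b c : cle a b -> cle b c -> cle a c.
Proof.
  unfold cle; destruct a, b, c; simpl; intros H1 H2;
  try apply Nat.leb_le in H1; try apply Nat.leb_le in H2;
  try apply Nat.leb_le; try lia; try discriminate; reflexivity.
Qed.

Lemma cle_total a b : cle a b \/ cle b a.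
Proof.
  unfold cle; destruct a, b; simpl; auto.
  destruct (Nat.le_ge_cases a a0); [left|right]; apply Nat.leb_le; lia.
Qed.

Lemma cle_max_l a b : cle a (cmax a b).
Proof.
  unfold cmax. destruct (cleb a b) eqn:E; [exact E| apply cle_refl].
Qed.

Lemma cle_max_r a b : cle b (cmax a b).
Proof.
  unfold cmax. destruct (cleb a b) eqn:E; [apply cle_refl|].
  destruct (cle_total a b) as [H|H]; [unfold cle in H; congruence| exact H].
Qed.

Lemma cmax_lub a b c : cle a c -> cle b c -> cle (cmax a b) c.
Proof. unfold cmax; destruct (cleb a b); auto. Qed.

Lemma cmax_mono a b c d : cle a c -> cle b d -> cle (cmax a b) (cmax c d).
Proof.
  intros. apply cmax_lub.
  - eapply cle_trans; [eassumption|apply cle_max_l].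
  - eapply cle_trans; [eassumption|apply cle_max_r].
Qed.

Lemma cle_Pol0 c : cle (Pol 0) c.
Proof. destruct c; reflexivity. Qed.

Lemma cmax_Pol0 c : cmax (Pol 0) c = c.
Proof. unfold cmax. rewrite (cle_Pol0 c). reflexivity. Qed.

Section IotaMono.
Variables f g : nat -> Rbar.
Hypothesis Hfg : forall n, Rbar_le (f n) (g n).

Lemma bigO_mono h : bigO g h -> bigO f h.
Proof.
  intros [c [N H]]. exists c, N. intros n Hn.
  eapply Rbar_le_trans; [apply Hfg| apply H; exact Hn].
Qed.

Lemma never_omega_mono : never_omega g -> never_omega f.
Proof.
  intros H n E. apply (H n). specialize (Hfg n). rewrite E in Hfg.
  destruct (g n); simpl in Hfg; tauto.
Qed.
End IotaMono.

Lemma least_exists (P : nat -> Prop) : (exists a, P a) ->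
  exists m, P m /\ forall b, P b -> (m <= b)%nat.
Proof.
  intros [a Ha]. revert Ha. induction a as [a IH] using (well_founded_induction lt_wf).
  intros Ha. destruct (classic (exists b, (b < a)%nat /\ P b)) as [[b [Hb1 Hb2]]|Hn].
  - exact (IH b Hb1 Hb2).
  - exists a. split; auto. intros b Hb. destruct (Nat.lt_ge_cases b a); auto.
    exfalso. apply Hn. eauto.
Qed.

Lemma iota_pol_spec f (H : exists a, in_Pol f a) :
  iota f = Pol (epsilon (inhabits 0%nat)
           (fun a => in_Pol f a /\ forall b, in_Pol f b -> (a <= b)%nat)) /\
  in_Pol f (epsilon (inhabits 0%nat)
           (fun a => in_Pol f a /\ forall b, in_Pol f b -> (a <= b)%nat)) /\
  forall b, in_Pol f b -> (epsilon (inhabits 0%nat)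
           (fun a => in_Pol f a /\ forall b, in_Pol f b -> (a <= b)%nat) <= b)%nat.
Proof.
  pose proof (epsilon_spec (inhabits 0%nat)
           (fun a => in_Pol f a /\ forall b, in_Pol f b -> (a <= b)%nat) (least_exists _ H)) as [H1 H2].
  split; [|split; auto].
  unfold iota. destruct (excluded_middle_informative (exists a, in_Pol f a)); [reflexivity|contradiction].
Qed.

Lemma iota_le_Pol f b : in_Pol f b -> cle (iota f) (Pol b).
Proof.
  intros H. destruct (iota_pol_spec f (ex_intro _ b H)) as [E [_ H2]].
  rewrite E. unfold cle; simpl. apply Nat.leb_le. apply H2, H.
Qed.

Lemma iota_mono f g : (forall n, Rbar_le (f n) (g n)) -> cle (iota f) (iota g).
Proof.
  intros Hfg.
  destruct (classic (exists a, in_Pol g a)) as [Hg|Hg].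
  - destruct (iota_pol_spec g Hg) as [E [H1 H2]]. rewrite E.
    apply iota_le_Pol. unfold in_Pol. eapply bigO_mono; eauto.
  - unfold iota;
    repeat match goal with |- context [excluded_middle_informative ?P] =>
      destruct (excluded_middle_informative P) end; try reflexivity; try contradiction;
    exfalso;
    try (match goal with H: in_Exp g, H': ~ in_Exp f |- _ =>
      destruct H as [cs Hcs]; apply H'; exists cs; eapply bigO_mono; eauto end);
    try (match goal with H: in_2Exp g, H': ~ in_2Exp f |- _ =>
      destruct H as [cs Hcs]; apply H'; exists cs; eapply bigO_mono; eauto end);
    try (match goal with H: never_omega g, H': ~ never_omega f |- _ =>
      apply H'; eapply never_omega_mono; eauto end).
Qed.

Fixpoint term_ind2 (F : Type) (P : term F -> Prop)
  (HV : forall x, P (Var x)) (HF : forall f ts, Forall P ts -> P (Fn f ts)) (t : term F) : P t :=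
  match t with
  | Var x => HV x
  | Fn f ts => HF f ts ((fix go (l : list (term F)) : Forall P l :=
        match l with [] => Forall_nil _ | u :: l' => Forall_cons _ (term_ind2 F P HV HF u) (go l') end) ts)
  end.

Lemma fold_and_Forall (A : Type) (P : A -> Prop) l :
  fold_right and True (map P l) <-> Forall P l.
Proof.
  induction l; simpl; split; intros H; auto.
  - destruct H; constructor; tauto.
  - inversion H; subst; split; tauto.
Qed.

Lemma map_term_comp (A B C : Type) (f : A -> B) (g : B -> C) t :
  map_term g (map_term f t) = map_term (fun x => g (f x)) t.
Proof.
  induction t using term_ind2; simpl; auto. f_equal. rewrite map_map.
  induction H; simpl; f_equal; auto.
Qed.

Lemma map_term_id (A : Type) (f : A -> A) t : (forall x, f x = x) -> map_term f t = t.
Proof.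
  intros Hf. induction t using term_ind2; simpl; auto. rewrite Hf. f_equal.
  induction H; simpl; f_equal; auto.
Qed.

Lemma subterm_at_app (F : Type) (t : term F) q q' :
  subterm_at t (q ++ q') = match subterm_at t q with Some u => subterm_at u q' | None => None end.
Proof.
  revert t; induction q; intros t; simpl; auto.
  destruct t; auto. destruct (nth_error l a); auto.
Qed.

Lemma map_list_upd (A B : Type) (h : A -> B) (g : A -> A) (g' : B -> B) l i :
  (forall x, h (g x) = g' (h x)) -> map h (list_upd l i g) = list_upd (map h l) i g'.
Proof.
  intros H; revert i; induction l; intros [|i]; simpl; auto; f_equal; auto.
Qed.

Lemma Forall_list_upd (A : Type) (P : A -> Prop) (g : A -> A) l i :
  Forall P l -> (forall x, nth_error l i = Some x -> P (g x)) -> Forall P (list_upd l i g).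
Proof.
  revert i; induction l; intros [|i] H1 H2; simpl; auto; inversion H1; subst; constructor; auto.
Qed.

Lemma subst_Fn_sub (F : Type) (t : term F) sigma x :
  In x (vars t) -> exists q, subterm_at t q = Some (Var x) /\ subterm_at (subst t sigma) q = Some (sigma x).
Proof.
  induction t using term_ind2; simpl; intros Hx.
  - destruct Hx as [<-|[]]. exists []. simpl. auto.
  - apply in_flat_map in Hx. destruct Hx as [u [Hu Hx]].
    apply In_nth_error in Hu. destruct Hu as [i Hi].
    assert (Hu : In u ts) by (eapply nth_error_In; eauto).
    rewrite Forall_forall in H. destruct (H u Hu Hx) as [q [Hq1 Hq2]].
    exists (i :: q). simpl. rewrite Hi, nth_error_map, Hi. simpl. auto.
Qed.

Section ADPL.
Variable Sg : Type.
Variable Rs : list (rule Sg).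

Lemma erase_embed (t : term Sg) : erase (embed t) = t.
Proof. unfold erase, embed. rewrite map_term_comp. apply map_term_id. reflexivity. Qed.

Lemma erase_sharpD (t : term Sg) : erase (sharpD Rs t) = t.
Proof. unfold erase, sharpD. rewrite map_term_comp. apply map_term_id. reflexivity. Qed.

Lemma erase_asubst (t : aterm Sg) sigma : erase (asubst t sigma) = subst (erase t) sigma.
Proof.
  induction t using term_ind2; simpl.
  - apply erase_embed.
  - unfold erase, asubst in *; simpl. f_equal. rewrite !map_map.
    induction H; simpl; f_equal; auto.
Qed.

Lemma erase_replace p (s w : aterm Sg) :
  erase (replace_at s p w) = replace_at (erase s) p (erase w).
Proof.
  revert s; induction p; intros s; simpl; auto.
  destruct s; simpl; auto. unfold erase; simpl. f_equal. apply map_list_upd. intros x. apply IHp.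
Qed.

Lemma subterm_erase p (s : aterm Sg) :
  subterm_at (erase s) p = option_map (@erase Sg) (subterm_at s p).
Proof.
  revert s; induction p; intros s; simpl; auto.
  destruct s; simpl; auto. unfold erase at 1; simpl.
  rewrite nth_error_map. destruct (nth_error l a); simpl; auto. apply IHp.
Qed.

Lemma NF_sub (t u : term Sg) q : NF Rs t -> subterm_at t q = Some u -> NF Rs u.
Proof.
  intros H Hq [r [p [sigma [Hr Hp]]]]. apply H. exists r, (q ++ p), sigma.
  rewrite subterm_at_app, Hq. auto.
Qed.

Lemma not_NF_redex r sigma : In r Rs -> ~ NF Rs (subst (lhs r) sigma).
Proof. intros Hr H. apply H. exists r, [], sigma. auto. Qed.

Fixpoint Inv (t : aterm Sg) : Prop :=
  match t with
  | Var _ => True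
  | Fn fb us => (defined Rs (fst fb) -> ~ NF Rs (erase (Fn fb us)) -> snd fb = true) /\
                fold_right and True (map Inv us)
  end.

Lemma Inv_sub p (s u : aterm Sg) : Inv s -> subterm_at s p = Some u -> Inv u.
Proof.
  revert s; induction p; intros s Hs Hp; simpl in Hp.
  - congruence.
  - destruct s; [discriminate|]. destruct (nth_error l a) eqn:E; [|discriminate].
    simpl in Hs. destruct Hs as [_ Hs]. apply fold_and_Forall in Hs.
    rewrite Forall_forall in Hs. eapply IHp; eauto. apply Hs. eapply nth_error_In; eauto.
Qed.

Lemma Inv_replace p (s u w : aterm Sg) :
  subterm_at s p = Some u -> ~ NF Rs (erase u) -> Inv s -> Inv w -> Inv (replace_at s p w).
Proof.
  revert s; induction p; intros s Hp Hnf Hs Hw; simpl in *; auto.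
  destruct s; auto. destruct (nth_error l a) eqn:E; [|discriminate].
  simpl in Hs |- *. destruct Hs as [Hroot Hs]. split.
  - intros Hd _. apply Hroot; auto. intros HN. apply Hnf.
    eapply (NF_sub _ _ (a :: p)); eauto. rewrite subterm_erase. simpl. rewrite E, Hp. reflexivity.
  - apply fold_and_Forall. apply fold_and_Forall in Hs. apply Forall_list_upd; auto.
    intros x Hx. rewrite E in Hx. injection Hx as <-. eapply IHp; eauto.
    rewrite Forall_forall in Hs. apply Hs. eapply nth_error_In; eauto.
Qed.

Lemma Inv_embed (t : term Sg) : NF Rs t -> Inv (embed t).
Proof.
  induction t using term_ind2; simpl; auto. intros HN. split.
  - intros _ H'. exfalso. apply H'. change (NF Rs (erase (embed (Fn f ts)))). rewrite erase_embed. auto.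
  - apply fold_and_Forall. rewrite Forall_map. rewrite Forall_forall in *.
    intros x Hx. apply H; auto. apply In_nth_error in Hx. destruct Hx as [i Hi].
    eapply (NF_sub _ _ [i]); eauto. simpl. rewrite Hi. reflexivity.
Qed.

Lemma Inv_embed_nodef (t : term Sg) : (forall g, In g (syms t) -> ~ defined Rs g) -> Inv (embed t).
Proof.
  induction t using term_ind2; simpl; auto. intros HN. split.
  - intros Hd. exfalso. apply (HN f); auto.
  - apply fold_and_Forall. rewrite Forall_map. rewrite Forall_forall in *.
    intros x Hx. apply H; auto. intros g Hg. apply HN. right. apply in_flat_map. eauto.
Qed.

Lemma Inv_asubst_sharpD (r : term Sg) sigma :
  (forall x, In x (vars r) -> NF Rs (sigma x)) -> Inv (asubst (sharpD Rs r) sigma).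
Proof.
  induction r using term_ind2; simpl; intros Hx.
  - apply Inv_embed. auto.
  - split.
    + simpl. intros Hd _. destruct (excluded_middle_informative (defined Rs f)); auto; contradiction.
    + apply fold_and_Forall. rewrite !Forall_map. rewrite Forall_forall in *.
      intros x Hin. apply H; auto. intros y Hy. apply Hx. apply in_flat_map. eauto.
Qed.
End ADPL.
Arguments Inv {Sg} Rs t.

Lemma Rbar_lub_le (E : Rbar -> Prop) b : (forall x, E x -> Rbar_le x b) -> Rbar_le (Rbar_lub E) b.
Proof. intros H. unfold Rbar_lub. destruct (Rbar_ex_lub E) as [l [Hub Hl]]. simpl. apply Hl. exact H. Qed.

Lemma Rbar_lub_ge (E : Rbar -> Prop) x : E x -> Rbar_le x (Rbar_lub E).
Proof. intros H. unfold Rbar_lub. destruct (Rbar_ex_lub E) as [l [Hub Hl]]. simpl. apply Hub. exact H. Qed.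

Lemma level_node ch n v : In v (level ch n) -> is_node ch v.
Proof.
  revert v; induction n; simpl; intros v Hv.
  - destruct Hv as [<-|[]]. constructor.
  - apply in_flat_map in Hv. destruct Hv as [w [Hw Hv]]. unfold children in Hv.
    apply in_map_iff in Hv. destruct Hv as [i [<- Hi]]. apply in_seq in Hi.
    constructor; auto. lia.
Qed.

Lemma ind_iff (A B : Prop) : (A <-> B) -> ind A = ind B.
Proof.
  intros H. unfold ind. destruct (ClassicalEpsilon.excluded_middle_informative A), (ClassicalEpsilon.excluded_middle_informative B); try reflexivity; exfalso; tauto.
Qed.

Lemma nth_map_lt (A B : Type) (f : A -> B) l d d' i :
  (i < length l)%nat -> nth i (map f l) d = f (nth i l d').
Proof. intros H. rewrite (nth_indep _ _ (f d')) by (rewrite length_map; exact H). apply map_nth. Qed.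

Section Sim.
Variable Sg : Type.
Variable ar : Sg -> nat.
Variable Rs : list (rule Sg).
Hypothesis HR : is_PTRS ar Rs.
Variables P S : adp Sg -> Prop.
Hypothesis HP : forall a, P a -> In a (A_R Rs).
Hypothesis HPa : forall a, In a (A_R Rs) -> P a.
Hypothesis HS : forall a, In a (A_R Rs) -> S a.
Variable T : ltree (term Sg).

Lemma NF_NFP (t : term Sg) : NF Rs t -> NF_P P t.
Proof.
  intros H [a [p [sigma [Ha Hp]]]]. apply HP in Ha. unfold A_R in Ha.
  apply in_map_iff in Ha. destruct Ha as [r [<- Hr]]. apply H. exists r, p, sigma. auto.
Qed.

Definition Spec v (s : aterm Sg) (x : adp Sg * list (aterm Sg)) : Prop :=
  S (fst x) /\ length (snd x) = nch T v /\
  adp_step Rs P s (fst x) true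
    (map (fun i => (prb T (v ++ [i]) / prb T v, nth i (snd x) (Var 0))%R) (seq 0 (nch T v))) /\
  (forall i, (i < nch T v)%nat -> Inv Rs (nth i (snd x) (Var 0)) /\ erase (nth i (snd x) (Var 0)) = lab T (v ++ [i])).

Lemma key v (s : aterm Sg) : Inv Rs s -> erase s = lab T v -> istep Rs (lab T v) (child_dist T v) ->
  exists x, Spec v s x.
Proof.
  intros Hinv Her [r [p [sigma [Hr [Hsub [Hnf Hperm]]]]]].
  destruct (HR r Hr) as [[f [ts Hlhs]] [_ [Hrhs _]]].
  destruct (Permutation_map_inv _ _ Hperm) as [l3 [Hcd Hp3]].
  set (g := fun pt : R * term Sg => (fst pt, replace_at (lab T v) p (subst (snd pt) sigma))) in *.
  set (k := fun pt : R * term Sg => ((fst pt, replace_at s p (asubst (sharpD Rs (snd pt)) sigma)) : R * aterm Sg)).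
  set (n := nch T v).
  assert (Hlen : length l3 = n).
  { apply (f_equal (@length _)) in Hcd. rewrite length_map in Hcd. rewrite <- Hcd.
    unfold child_dist, children. rewrite !length_map, length_seq. reflexivity. }
  set (F := fun i => (prb T (v ++ [i]) / prb T v, lab T (v ++ [i]))%R).
  assert (Hnth : forall i, (i < n)%nat -> F i = g (nth i l3 (0%R, Var 0))).
  { intros i Hi. apply (f_equal (fun l => nth i l (g (0%R, Var 0)))) in Hcd.
    rewrite map_nth in Hcd. rewrite <- Hcd. unfold child_dist, children. rewrite map_map.
    rewrite (nth_indep _ _ (F 0%nat)) by (rewrite length_map, length_seq; exact Hi).
    rewrite (map_nth F). rewrite seq_nth by exact Hi. reflexivity. }
  assert (HA : In (mkADP (lhs r) (map (fun pt => (fst pt, sharpD Rs (snd pt))) (rhs r)) true) (A_R Rs)).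
  { unfold A_R. apply in_map_iff. exists r. auto. }
  assert (Hsub' : subterm_at (erase s) p = Some (subst (lhs r) sigma)) by (rewrite Her; exact Hsub).
  rewrite subterm_erase in Hsub'.
  destruct (subterm_at s p) as [u|] eqn:Eu; simpl in Hsub'; [|discriminate].
  injection Hsub' as Heu.
  assert (HnNF : ~ NF Rs (erase u)) by (rewrite Heu; apply not_NF_redex; auto).
  assert (Hkid : forall i, (i < n)%nat ->
     nth i (map (fun pt => snd (k pt)) l3) (Var 0) = snd (k (nth i l3 (0%R, Var 0)))).
  { intros i Hi. rewrite (nth_indep _ _ (snd (k (0%R, Var 0)))) by (rewrite length_map; lia).
    apply (map_nth (fun pt => snd (k pt))). }
  exists (mkADP (lhs r) (map (fun pt => (fst pt, sharpD Rs (snd pt))) (rhs r)) true,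
          map (fun pt => snd (k pt)) l3).
  unfold Spec; cbn [fst snd]. split; [apply HS; exact HA|]. split; [rewrite length_map; exact Hlen|]. split.
  - unfold adp_step. split; [apply HPa; exact HA|].
    destruct u as [x|fb us].
    { exfalso. rewrite Hlhs in Heu. simpl in Heu. discriminate. }
    assert (Hfb : fst fb = f).
    { rewrite Hlhs in Heu. unfold erase in Heu. simpl in Heu. injection Heu; auto. }
    assert (Hdef : defined Rs (fst fb)).
    { rewrite Hfb. exists r. rewrite Hlhs. auto. }
    exists p, (Fn fb us), sigma. split; [exact Eu|]. split.
    { exists fb, us. auto. }
    split; [exact Heu|]. split.
    { intros q w Hq Hw. apply NF_NFP. exact (Hnf q w Hq Hw). }
    split.
    { pose proof (Inv_sub _ _ _ _ _ Hinv Eu) as Hu. simpl in Hu. destruct Hu as [Hu _].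
      simpl. symmetry. apply Hu; auto. }
    assert (Heq : map (fun i => (prb T (v ++ [i]) / prb T v, nth i (map (fun pt => snd (k pt)) l3) (Var 0))%R)
          (seq 0 (nch T v)) = map k l3).
    { apply nth_ext with (k (0%R, Var 0)) (k (0%R, Var 0)).
      { rewrite !length_map, length_seq. symmetry; exact Hlen. }
      intros i Hi. rewrite length_map, length_seq in Hi.
      rewrite (nth_map_lt _ _ _ (seq 0 (nch T v)) _ 0%nat) by (rewrite length_seq; exact Hi).
      rewrite (nth_map_lt _ _ k l3 _ (0%R, Var 0)) by lia.
      rewrite seq_nth by exact Hi. simpl. rewrite Hkid by exact Hi.
      pose proof (Hnth i Hi) as E. unfold F, g in E. injection E as E1 E2. rewrite E1. reflexivity. }
    rewrite Heq.
    eapply Permutation_trans; [|apply Permutation_refl'; symmetry; apply map_map].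
    exact (Permutation_map k (Permutation_sym Hp3)).
  - intros i Hi. fold n in Hi. rewrite Hkid by exact Hi.
    assert (Hin : In (nth i l3 (0%R, Var 0)) (rhs r)).
    { eapply Permutation_in; [apply Permutation_sym; exact Hp3|]. apply nth_In. lia. }
    split.
    + unfold k; simpl. eapply Inv_replace; eauto.
      apply Inv_asubst_sharpD. intros x Hx.
      destruct (nth i l3 (0%R, Var 0)) as [pr rt] eqn:Ept. simpl in Hx.
      destruct (Hrhs pr rt Hin) as [_ [_ Hincl]].
      destruct (subst_Fn_sub _ (lhs r) sigma x (Hincl x Hx)) as [q [Hq1 Hq2]].
      apply (Hnf q); auto. intros ->. rewrite Hlhs in Hq1. simpl in Hq1. discriminate.
    + unfold k; simpl. rewrite erase_replace, Her, erase_asubst, erase_sharpD.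
      pose proof (Hnth i Hi) as E. unfold F, g in E. injection E as E1 E2. rewrite E2. reflexivity.
Qed.

Variable t : term Sg.
Hypothesis Hbasic : basic ar Rs t.
Hypothesis HT : is_RST Rs T t.

Definition dflt : adp Sg * list (aterm Sg) := (mkADP (Var 0) [] true, []).
Definition choice v s := epsilon (inhabits dflt) (Spec v s).
Definition stepf (acc : list nat * aterm Sg) (i : nat) :=
  (fst acc ++ [i], nth i (snd (choice (fst acc) (snd acc))) (Var 0)).
Definition build v := snd (fold_left stepf v ([], sharp_root t)).

Lemma fold_fst v : forall w s, fst (fold_left stepf v (w, s)) = w ++ v.
Proof.
  induction v; intros w s; cbn [fold_left]; [simpl; rewrite app_nil_r; auto|].
  change (stepf (w, s) a) with (w ++ [a], nth a (snd (choice w s)) (Var 0)).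
  rewrite IHv, <- app_assoc. reflexivity.
Qed.

Lemma build_snoc v i : build (v ++ [i]) = nth i (snd (choice v (build v))) (Var 0).
Proof.
  unfold build. rewrite fold_left_app. cbn [fold_left].
  pose proof (fold_fst v [] (sharp_root t)) as E.
  destruct (fold_left stepf v ([], sharp_root t)). simpl in *. subst. reflexivity.
Qed.

Lemma build_inv v : is_node (nch T) v -> Inv Rs (build v) /\ erase (build v) = lab T v /\
   (inner T v -> Spec v (build v) (choice v (build v))).
Proof.
  destruct HT as [_ [Hlab0 Hst]].
  assert (Hsp : forall v, is_node (nch T) v -> Inv Rs (build v) -> erase (build v) = lab T v ->
      inner T v -> Spec v (build v) (choice v (build v))).
  { intros w Hw H1 H2 Hin. unfold choice. apply epsilon_spec. apply key; auto. }
  induction 1 as [|v i Hv IH Hi].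
  - assert (H0 : Inv Rs (build []) /\ erase (build []) = lab T []).
    { destruct Hbasic as [_ [f [ts [Ht [_ Hnd]]]]]. unfold build; simpl. rewrite Hlab0, Ht. simpl.
      split.
      - split; [auto|]. apply fold_and_Forall. rewrite Forall_map, Forall_forall.
        intros u Hu. apply Inv_embed_nodef. apply Hnd. exact Hu.
      - transitivity (Fn f (map (@erase Sg) (map (@embed Sg) ts))); [reflexivity|]. f_equal. rewrite map_map. rewrite <- (map_id ts) at 2.
        apply map_ext. apply erase_embed. }
    destruct H0. split; auto. split; auto. apply Hsp; auto. constructor.
  - destruct IH as [H1 [H2 H3]].
    assert (Hinn : inner T v) by (unfold inner; lia).
    destruct (H3 Hinn) as [_ [_ [_ H4]]].
    rewrite build_snoc. destruct (H4 i Hi). split; auto. split; auto.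
    rewrite <- build_snoc. apply Hsp; auto. constructor; auto. rewrite build_snoc; auto.
    rewrite build_snoc; auto.
Qed.

Definition T' : ltree (aterm Sg * adp Sg * bool) :=
  mkTree (nch T) (prb T) (fun v => (build v, fst (choice v (build v)), true)).

Lemma T'_chain : is_chain_tree Rs P T' (sharp_root t).
Proof.
  destruct HT as [Hp0 [Hlab0 Hst]].
  split; [exact Hp0|]. split; [reflexivity|].
  intros v Hv Hin. simpl.
  destruct (build_inv v Hv) as [_ [_ H3]]. destruct (H3 Hin) as [_ [_ [H _]]].
  replace (map (fun pl => (fst pl, fst (fst (snd pl)))) (child_dist T' v)) with
    (map (fun i => (prb T (v ++ [i]) / prb T v, nth i (snd (choice v (build v))) (Var 0))%R) (seq 0 (nch T v))).
  { exact H. }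
  unfold child_dist, children. simpl. rewrite !map_map. apply map_ext. intros i. simpl.
  rewrite build_snoc. reflexivity.
Qed.

Lemma T'_edl : edl T = edl_PS S T'.
Proof.
  unfold edl, edl_PS, wsum. apply Lub_Rbar_eqset. intros x. simpl.
  assert (E : forall d, map (fun v => (ind (inner T v) * prb T v)%R) (flat_map (level (nch T)) (seq 0 d)) =
     map (fun v => (ind (inner T' v /\ true = true /\ S (fst (choice v (build v)))) * prb T v)%R)
        (flat_map (level (nch T)) (seq 0 d))).
  { intros d. apply map_ext_in. intros v Hv. f_equal. apply ind_iff.
    apply in_flat_map in Hv. destruct Hv as [m [_ Hv]]. apply level_node in Hv.
    unfold inner; simpl. split; [|tauto]. intros Hin. split; auto. split; auto.
    destruct (build_inv v Hv) as [_ [_ H3]]. apply H3. exact Hin. }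
  split; intros [d Hd]; exists d; rewrite Hd; [rewrite E| rewrite <- E]; reflexivity.
Qed.
End Sim.

Fixpoint ptree_ind2 (Sg : Type) (Q : ptree Sg -> Prop)
  (H : forall p c ks, Forall Q ks -> Q (PNode p c ks)) (t : ptree Sg) : Q t :=
  match t with
  | PNode p c ks => H p c ks ((fix go (l : list (ptree Sg)) : Forall Q l :=
        match l with [] => Forall_nil _ | u :: l' => Forall_cons _ (ptree_ind2 Sg Q H u) (go l') end) ks)
  end.

Lemma fold_Rplus_0 (A : Type) (f : A -> R) l : (forall x, f x = 0%R) -> fold_right Rplus 0%R (map f l) = 0%R.
Proof. intros H. induction l; simpl; auto. rewrite H, IHl. ring. Qed.

Lemma solved_iota_0 (Sg : Type) (ar : Sg -> nat) (Rs : list (rule Sg)) p :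
  solved p -> cle (iota_prob ar Rs p) (Pol 0).
Proof.
  intros Hs. unfold iota_prob, iota_PS. apply iota_le_Pol. exists 0%R, 0%nat. intros n _.
  replace (0 * (INR n ^ 0))%R with 0%R by ring.
  apply Rbar_lub_le. intros x [t [_ [_ ->]]].
  unfold edh_PS. apply Rbar_lub_le. intros y [T [_ ->]].
  unfold edl_PS, wsum. destruct (Lub_Rbar_correct (fun x : R => exists d : nat,
     x = fold_right Rplus 0%R (map (fun v => (ind (inner T v /\ snd (lab T v) = true /\ In (snd (fst (lab T v))) (pS p)) * prb T v)%R)
       (flat_map (level (nch T)) (seq 0 d))))) as [_ Hl].
  apply Hl. intros z [d ->]. rewrite fold_Rplus_0; [simpl; apply Rle_refl|].
  intros v. unfold Defs.ind. destruct (ClassicalEpsilon.excluded_middle_informative _) as [[_ [_ Hin]]|]; [exfalso; apply (Hs _ Hin)| ring].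
Qed.

Lemma maxLC'_le (Sg : Type) (ar : Sg -> nat) (Rs : list (rule Sg)) (t : ptree Sg) :
  ptree_solved t -> cle (maxLC' ar Rs t) (maxLC t).
Proof.
  induction t as [p c ks IH] using ptree_ind2. intros Hs.
  destruct ks as [|k ks'].
  - simpl in *. eapply cle_trans; [apply solved_iota_0; exact Hs| apply cle_Pol0].
  - change (cle (fold_right cmax c (map (maxLC' ar Rs) (k :: ks'))) (fold_right cmax c (map (@maxLC Sg) (k :: ks')))).
    change (fold_right and True (map (@ptree_solved Sg) (k :: ks'))) in Hs.
    revert Hs IH. generalize (k :: ks'). intros l. induction l as [|a l IHl]; simpl; intros Hs IH.
    + apply cle_refl.
    + inversion IH; subst. destruct Hs. apply cmax_mono; auto.
Qed.

Theorem mainTheorem4 (Sg : Type) (ar : Sg -> nat)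
  (Sg_finite : exists l : list Sg, forall f : Sg, In f l)
  (Rs : list (rule Sg)) (HR : is_PTRS ar Rs)
  (PT : ptree Sg)
  (Hpt : is_proof_tree PT)
  (Hwf : well_formed ar Rs PT)
  (Hsolved : ptree_solved PT)
  (Hroot : same_set (pP (plabel PT)) (A_R Rs) /\ same_set (pS (plabel PT)) (A_R Rs)) :
  cle (iota_R ar Rs) (maxLC PT).
Proof.
  destruct Hroot as [HPs HSs].
  set (P := fun a => In a (pP (plabel PT))).
  set (S := fun a => In a (pS (plabel PT))).
  assert (HP : forall a, P a -> In a (A_R Rs)) by (intros a; apply HPs).
  assert (HPa : forall a, In a (A_R Rs) -> P a) by (intros a; apply HPs).
  assert (HS : forall a, In a (A_R Rs) -> S a) by (intros a; apply HSs).
  assert (Hedh : forall t, basic ar Rs t -> Rbar_le (edh Rs t) (edh_PS Rs P S t)).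
  { intros t Hb. unfold edh. apply Rbar_lub_le. intros x [T [HT ->]].
    rewrite (T'_edl Sg ar Rs HR P S HP HPa HS T t Hb HT).
    unfold edh_PS. apply Rbar_lub_ge. eexists. split; [apply (T'_chain Sg ar Rs HR P S HP HPa HS T t Hb HT)|reflexivity]. }
  assert (H1 : cle (iota_R ar Rs) (iota_prob ar Rs (plabel PT))).
  { unfold iota_R, iota_prob, iota_PS. apply iota_mono. intros n.
    unfold eirc. apply Rbar_lub_le. intros x [t [Hb [Hsz ->]]].
    eapply Rbar_le_trans; [apply Hedh; exact Hb|]. apply Rbar_lub_ge. exists t. auto. }
  assert (H2 : cle (iota_prob ar Rs (plabel PT)) (maxLC' ar Rs PT)).
  { destruct PT as [p c ks]. destruct Hwf as [Hw _]. rewrite cmax_Pol0 in Hw. exact Hw. }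
  eapply cle_trans; [exact H1|]. eapply cle_trans; [exact H2|]. apply maxLC'_le. exact Hsolved.
Qed.
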